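(* Let $\underline{\mathbf{r}}=(\underline r_1,\dots,\underline r_{n_1})$ and $\mathbf{c}=(c_1,\dots,c_{n_2})$ be non-increasing integer vectors and $\overline{\mathbf{r}}=(\overline r_1,\dots,\overline r_{n_1})$, $\overline{\mathbf{c}}=(\overline c_1,\dots,\overline c_{n_2})$ integer vectors with $\underline{\mathbf{r}}\le\overline{\mathbf{r}}$ and $\mathbf{c}\le\overline{\mathbf{c}}$, such that $(\underline{\mathbf{r}},\overline{\mathbf{r}},\mathbf{c},\overline{\mathbf{c}})$ is realizable and $(\underline{\mathbf{r}},\overline{\mathbf{r}},\mathbf{c},\mathbf{c})$ is not realizable. Then there is a right-most position $i$ with $c_i<\overline c_i$. Let $j$ be the left-most position with $c_j=c_i$, and define $\mathbf{a}=(a_1,\dots,a_{n_2})$, $\overline{\mathbf{a}}=(\overline a_1,\dots,\overline a_{n_2})$ by $a_j=c_j+1$, $a_k=c_k$ for $k\ne j$; and $\overline a_j=\overline c_i$, $\overline a_i=\overline c_j$, $\overline a_k=\overline c_k$ for $k\notin\{i,j\}$. Then $\mathbf{a}$ is non-increasing, $\mathbf{a}\le\overline{\mathbf{a}}$, and $(\underline{\mathbf{r}},\overline{\mathbf{r}},\mathbf{a},\overline{\mathbf{a}})$ is realizable.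
   Context: Inequalities between vectors are componentwise. A four-tuple $(\underline{\mathbf{r}},\overline{\mathbf{r}},\underline{\mathbf{c}},\overline{\mathbf{c}})$ of integer vectors (first two of length $n_1$, last two of length $n_2$) is realizable if there is a bipartite graph $G=(U,V,E)$ with $U=\{u_1,\dots,u_{n_1}\}$, $V=\{v_1,\dots,v_{n_2}\}$ such that $\underline r_i\le d_G(u_i)\le\overline r_i$ and $\underline c_j\le d_G(v_j)\le\overline c_j$ for all $i,j$. *)

(* Defs.v *)
From mathcomp Require Import all_boot all_order all_algebra.
Set Implicit Arguments. Unset Strict Implicit. Unset Printing Implicit Defensive.
Import Order.TTheory GRing.Theory Num.Theory.
Local Open Scope ring_scope.

(* Integer vectors of length n are functions 'I_n -> int (positions 0..n-1). *)

Definition vle (n : nat) (x y : 'I_n -> int) : Prop := forall k, x k <= y k.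

Definition nonincreasing (n : nat) (x : 'I_n -> int) : Prop :=
  forall k l : 'I_n, (k <= l)%N -> x l <= x k.

(* A bipartite graph G=(U,V,E) with U = 'I_n1, V = 'I_n2 is given by its
   edge set E : {set 'I_n1 * 'I_n2} (simple graph). *)
Definition degU (n1 n2 : nat) (E : {set 'I_n1 * 'I_n2}) (i : 'I_n1) : nat :=
  #|[set j : 'I_n2 | (i, j) \in E]|.
Definition degV (n1 n2 : nat) (E : {set 'I_n1 * 'I_n2}) (j : 'I_n2) : nat :=
  #|[set i : 'I_n1 | (i, j) \in E]|.

Definition realizable (n1 n2 : nat) (rl ru : 'I_n1 -> int) (cl cu : 'I_n2 -> int)
  : Prop :=
  exists E : {set 'I_n1 * 'I_n2},
    (forall i, rl i <= (degU E i)%:Z <= ru i) /\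
    (forall j, cl j <= (degV E j)%:Z <= cu j).

Definition avec (n : nat) (c : 'I_n -> int) (j : 'I_n) : 'I_n -> int :=
  fun k => if k == j then c j + 1 else c k.
Definition abarvec (n : nat) (cbar : 'I_n -> int) (i j : 'I_n) : 'I_n -> int :=
  fun k => if k == j then cbar i else if k == i then cbar j else cbar k.

(* Main.v *)
Require Import Defs.
From mathcomp Require Import all_boot all_order all_algebra.
From mathcomp Require Import all_fingroup.
From mathcomp Require Import zify.
Import Order.TTheory GRing.Theory Num.Theory.
Local Open Scope ring_scope.

Lemma swap_cols (n1 n2 : nat) (E : {set 'I_n1 * 'I_n2}) (s : {perm 'I_n2}) :
  let F := [set p | (p.1, s p.2) \in E] in
  (forall v, degU F v = degU E v) /\ (forall l, degV F l = degV E (s l)).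
Proof.
move=> F; split.
- move=> v; rewrite /degU.
  rewrite -(card_preimset [set l | (v, l) \in E] (@perm_inj _ s)).
  by apply: eq_card => l; rewrite !inE.
- move=> l; rewrite /degV; apply: eq_card => v; by rewrite !inE.
Qed.

Lemma move_edge (n1 n2 : nat) (F : {set 'I_n1 * 'I_n2}) (u : 'I_n1) (k j : 'I_n2) :
  (u, k) \in F -> (u, j) \notin F ->
  exists G : {set 'I_n1 * 'I_n2},
    (forall v, degU G v = degU F v) /\ degV G j = (degV F j).+1 /\
    (degV G k).+1 = degV F k /\
    (forall l, l != j -> l != k -> degV G l = degV F l).
Proof.
move=> ukF ujF.
have kj : k != j by apply/eqP => e; move: ujF; rewrite -e ukF.
exists [set p | if p.1 == u then (u, tperm k j p.2) \in F else p \in F].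
split; [|split; [|split]].
- move=> v; rewrite /degU; case: (eqVneq v u) => [->|vu].
  + rewrite -(card_preimset [set l | (u, l) \in F] (@perm_inj _ (tperm k j))).
    by apply: eq_card => l; rewrite !inE eqxx.
  + by apply: eq_card => l; rewrite !inE /= (negbTE vu).
- rewrite /degV.
  have -> : [set v | (v, j) \in [set p | if p.1 == u then (u, tperm k j p.2) \in F else p \in F]]
        = u |: [set v | (v, j) \in F].
    apply/setP => v; rewrite !inE /= tpermR.
    by case: (eqVneq v u) => [->|]; rewrite ?ukF.
  by rewrite cardsU1 inE ujF.
- rewrite /degV (cardsD1 u [set v | (v, k) \in F]) inE ukF add1n.
  congr (_.+1); apply: eq_card => v; rewrite !inE /= tpermL.
  case: (eqVneq v u) => [->|]; by rewrite ?(negbTE ujF).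
- move=> l lj lk; rewrite /degV; apply: eq_card => v; rewrite !inE /= tpermD 1?eq_sym //.
  by case: (eqVneq v u) => [->|].
Qed.

Theorem lemma1 (n1 n2 : nat) (rl ru : 'I_n1 -> int) (c cbar : 'I_n2 -> int) :
  nonincreasing rl -> nonincreasing c ->
  vle rl ru -> vle c cbar ->
  realizable rl ru c cbar ->
  ~ realizable rl ru c c ->
  (exists i : 'I_n2, c i < cbar i /\ (forall k : 'I_n2, c k < cbar k -> (k <= i)%N))
  /\
  (forall i j : 'I_n2,
     c i < cbar i -> (forall k : 'I_n2, c k < cbar k -> (k <= i)%N) ->
     c j = c i -> (forall k : 'I_n2, c k = c i -> (j <= k)%N) ->
     [/\ nonincreasing (avec c j),
         vle (avec c j) (abarvec cbar i j) &
         realizable rl ru (avec c j) (abarvec cbar i j)]).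
Proof.
move=> _ cdec _ ccb [E [Er Ec]] nreal; split.
  case: (boolP [exists k, c k < cbar k]) => [/existsP [k0 Hk0]|].
    case: (@arg_maxnP _ k0 (fun k => c k < cbar k) (fun k : 'I_n2 => nat_of_ord k) Hk0) => i Hi Hmax.
    by exists i; split => // k Hk; apply: Hmax.
  move=> /existsPn Hn; exfalso; apply: nreal; exists E; split => // l.
  have := Ec l; have := Hn l; have := ccb l; rewrite -leNgt => h1 h2.
  case/andP => h3 h4; apply/andP; split => //; exact: le_trans h4 h2.
move=> i j ci imax cji jmin.
have ji : (j <= i)%N by apply: jmin.
split.
- move=> k l kl; rewrite /avec /=.
  have ckl := cdec _ _ kl.
  case: (eqVneq l j) => [lj|lj]; case: (eqVneq k j) => [kj|kj].
  + by [].
  + rewrite lj in kl ckl.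
    have : c k <> c i.
      move=> e; have := jmin _ e => jk.
      by apply/eqP: kj; rewrite -val_eqE /= eqn_leq jk kl.
    rewrite -cji; lia.
  + rewrite kj in ckl; lia.
  + exact: ckl.
- move=> k; rewrite /avec /abarvec.
  case: (eqVneq k j) => [kj|kj].
    rewrite cji; lia.
  case: (eqVneq k i) => [ki|ki].
    rewrite ki -cji; exact: ccb.
  exact: ccb.
have [F [Fr Fc]] : realizable rl ru c (abarvec cbar i j).
  have [Hu Hv] := @swap_cols _ _ E (tperm i j).
  exists [set p | (p.1, tperm i j p.2) \in E]; split.
    by move=> v; rewrite Hu; apply: Er.
  move=> l; rewrite Hv.
  have [h1 h2] : c (tperm i j l) = c l /\ cbar (tperm i j l) = abarvec cbar i j l.
    rewrite /abarvec; case: (eqVneq l j) => [->|lj].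
      by rewrite tpermR cji.
    case: (eqVneq l i) => [->|li].
      by rewrite tpermL cji.
    by rewrite tpermD // eq_sym.
  by rewrite -h1 -h2; apply: Ec.
case: (boolP (c j < (degV F j)%:Z)) => [hj|hj].
  exists F; split => // l; rewrite /avec.
  case: (eqVneq l j) => [->|lj]; last exact: Fc.
  have := Fc j; lia.
have Fj : (degV F j)%:Z = c j by have := Fc j; lia.
case: (boolP [exists k, c k < (degV F k)%:Z]); last first.
  move=> /existsPn Hn; exfalso; apply: nreal; exists F; split => // l.
  have := Fc l; have := Hn l; lia.
move=> /existsP [k Hk].
have kj : k != j by apply/eqP => e; rewrite e Fj in Hk; lia.
have ki : (k <= i)%N.
  rewrite leqNgt; apply/negP => ik.
  have ki : k != i by apply/eqP => e; rewrite e ltnn in ik.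
  have := Fc k; rewrite /abarvec (negbTE kj) (negbTE ki) => h.
  have : c k < cbar k by lia.
  by move/imax; rewrite leqNgt ik.
have cik := cdec _ _ ki.
have : ~~ ([set v | (v, k) \in F] \subset [set v | (v, j) \in F]).
  apply/negP => /subset_leq_card; rewrite -/(degV F k) -/(degV F j).
  lia.
move=> /subsetPn [u]; rewrite !inE => ukF ujF.
have [G [Gr [Gj [Gk Gl]]]] := @move_edge _ _ _ _ _ _ ukF ujF.
exists G; split.
  by move=> v; rewrite Gr; apply: Fr.
move=> l; rewrite /avec.
case: (eqVneq l j) => [->|lj].
  rewrite Gj; have := Fc j; rewrite /abarvec eqxx; lia.
case: (eqVneq l k) => [->|lk].
  have := Fc k; lia.
rewrite Gl //; exact: Fc.
Qed.
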